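(* Let $G=(V,E)$ be a graph and suppose there is a graphical instance $(f_v)_{v\in V}$ on $G$ for which $G$ has no EFX orientation, and an edge $e=uv\in E$ that has zero value for both of its endpoints $u$ and $v$. Let $G'$ be obtained from $G$ by replacing the edge $e$ with a path of any odd length from $u$ to $v$ whose internal vertices are new. Then $G'$ is not strongly EFX-orientable.
   Context: All graphs are finite and simple. For a graph $G=(V,E)$ and $v\in V$, $E(v)$ is the set of edges incident to $v$. A graphical instance on $G$ assigns to each vertex $v$ a valuation $f_v:2^E\to\mathbb{R}_{\ge 0}$ that is monotone ($A\subseteq B\Rightarrow f_v(A)\le f_v(B)$) and satisfies $f_v(X)=f_v(X\cap E(v))$ for all $X\subseteq E$. An item (edge) $m$ has zero value to agent (vertex) $i$ if $f_i(X\setminus\{m\})=f_i(X)$ for all $X\subseteq E$. An orientation of $G$ chooses for each edge one of its endpoints as its head; vertex $v$ receives the bundle $X_v$ of edges whose head is $v$. The orientation is EFX if for all $u,v\in V$ and every $g\in X_v$, $f_u(X_u)\ge f_u(X_v\setminus\{g\})$. A graph $G$ is strongly EFX-orientable if for every graphical instance on $G$ there exists an EFX orientation. *)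

(* Defs.v *)
From mathcomp Require Import all_boot all_order all_algebra.
Set Implicit Arguments. Unset Strict Implicit. Unset Printing Implicit Defensive.
Import Order.TTheory GRing.Theory Num.Theory.
Local Open Scope ring_scope.

Section Graphs.
Variable V : finType.

Definition simple_graph (adj : rel V) : Prop :=
  (forall x y, adj x y = adj y x) /\ (forall x, ~~ adj x x).

Definition edgeset (adj : rel V) : {set {set V}} :=
  [set e : {set V} | [exists x, exists y, adj x y && (e == [set x; y])]].

Definition incident (adj : rel V) (v : V) : {set {set V}} :=
  [set e in edgeset adj | v \in e].

Variable R : realFieldType.

Definition graphical_instance (adj : rel V) (f : V -> {set {set V}} -> R) : Prop :=
  forall v : V,
    (forall X : {set {set V}}, X \subset edgeset adj -> 0 <= f v X) /\
    (forall A B : {set {set V}}, A \subset B -> B \subset edgeset adj -> f v A <= f v B) /\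
    (forall X : {set {set V}}, X \subset edgeset adj -> f v X = f v (X :&: incident adj v)).

Definition zero_value (adj : rel V) (f : V -> {set {set V}} -> R) (i : V) (m : {set V}) : Prop :=
  forall X : {set {set V}}, X \subset edgeset adj -> f i (X :\ m) = f i X.

Definition orientation (adj : rel V) (head : {set V} -> V) : Prop :=
  forall e, e \in edgeset adj -> head e \in e.

Definition bundle (adj : rel V) (head : {set V} -> V) (v : V) : {set {set V}} :=
  [set e in edgeset adj | head e == v].

Definition EFX_orientation (adj : rel V) (f : V -> {set {set V}} -> R)
  (head : {set V} -> V) : Prop :=
  orientation adj head /\
  forall u v : V, forall g : {set V}, g \in bundle adj head v ->
    f u (bundle adj head v :\ g) <= f u (bundle adj head u).

Definition has_EFX_orientation (adj : rel V) (f : V -> {set {set V}} -> R) : Prop :=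
  exists head, EFX_orientation adj f head.

Definition strongly_EFX_orientable (adj : rel V) : Prop :=
  forall f : V -> {set {set V}} -> R, graphical_instance adj f -> has_EFX_orientation adj f.

End Graphs.

(* G' : replace edge uv by a path u - i_0 - ... - i_(2k-1) - v of odd length 2k+1,
   with 2k new internal vertices (for k = 0 the graph is unchanged). *)
Definition subdiv (V : finType) (adj : rel V) (u v : V) (k : nat)
  : rel (V + 'I_(k.*2))%type :=
  fun a b =>
    match a, b with
    | inl x, inl y => adj x y && ((k == 0)%N || ([set x; y] != [set u; v]))
    | inl x, inr i => ((x == u) && (val i == 0)%N) || ((x == v) && (val i == k.*2.-1)%N)
    | inr i, inl x => ((x == u) && (val i == 0)%N) || ((x == v) && (val i == k.*2.-1)%N)
    | inr i, inr j => ((val i).+1 == val j) || ((val j).+1 == val i)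
    end.
Arguments subdiv {V} adj u v k.

(* Main.v *)
Require Import Defs.
From mathcomp Require Import all_boot all_order all_algebra.
From mathcomp Require Import zify.
Set Implicit Arguments. Unset Strict Implicit. Unset Printing Implicit Defensive.
Import Order.TTheory GRing.Theory Num.Theory.
Local Open Scope ring_scope.

Ltac slia := simpl in *; lia.

Section Proof.
Variables (R : realFieldType) (V : finType) (adj : rel V)
  (f : V -> {set {set V}} -> R) (u v : V) (k : nat).
Hypothesis Hf : graphical_instance adj f.
Hypothesis Huv : adj u v.
Hypothesis Hzu : zero_value adj f u [set u; v].
Hypothesis Hzv : zero_value adj f v [set u; v].

Local Notation n := (k.*2).
Local Notation W := (V + 'I_(k.*2))%type.
Local Notation adj' := (subdiv adj u v k).
Local Notation E0 := [set u; v].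

Definition pref (i : 'I_n) : {set {set W}} :=
  [set e : {set W} | [exists j : 'I_n,
     (if odd i then (val j).+1 == val i else (val i).+1 == val j)
     && (e == [set inr i; inr j])]].

Definition phi (X : {set {set W}}) : {set {set V}} :=
  [set e in edgeset adj | (e != E0) && ((@inl V 'I_n) @: e \in X)].

Definition f' (w : W) (X : {set {set W}}) : R :=
  match w with inl x => f x (phi X) | inr i => (#|X :&: pref i|)%:R end.

Lemma edge_mem (T : finType) (a : rel T) x y : a x y -> [set x; y] \in edgeset a.
Proof. by move=> H; rewrite inE; apply/existsP; exists x; apply/existsP; exists y; rewrite H eqxx. Qed.

Lemma L_edge_inl e : e \in edgeset adj -> e != E0 -> (@inl V 'I_n) @: e \in edgeset adj'.
Proof.
rewrite inE => /existsP [x /existsP [y /andP [axy /eqP ->]]] ne.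
rewrite imsetU1 imset_set1; apply: edge_mem => /=.
by rewrite axy ne orbT.
Qed.

Lemma inphi e X : (e \in phi X) = [&& e \in edgeset adj, e != E0 & (@inl V 'I_n) @: e \in X].
Proof. by rewrite /phi in_set. Qed.

Lemma inbund (T : finType) (a : rel T) h c e : (e \in bundle a h c) = (e \in edgeset a) && (h e == c).
Proof. by rewrite /bundle in_set. Qed.

Lemma ininc (T : finType) (a : rel T) w e : (e \in incident a w) = (e \in edgeset a) && (w \in e).
Proof. by rewrite /incident in_set. Qed.

Lemma phi_sub X : phi X \subset edgeset adj.
Proof. by apply/subsetP => e; rewrite inE => /andP []. Qed.

Lemma phiS (A B : {set {set W}}) : A \subset B -> phi A \subset phi B.
Proof.
move=> /subsetP AB; apply/subsetP => e; rewrite !inE => /andP [-> /andP [-> /AB]] //.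
Qed.

Lemma pref_sub i : pref i \subset incident adj' (inr i).
Proof.
apply/subsetP => e; rewrite [e \in pref i]inE => /existsP [j /andP [c /eqP ->]].
rewrite inE; apply/andP; split; last by rewrite !inE eqxx.
apply: edge_mem => /=.
by case: (odd i) c => c; rewrite c ?orbT.
Qed.

Lemma pref_uniq i e s : e \in pref i -> s \in pref i -> e = s.
Proof.
rewrite !inE => /existsP [j /andP [c /eqP ->]] /existsP [j' /andP [c' /eqP ->]].
suff -> : j = j' by [].
apply: val_inj; move: c c'; case: (odd i) => /eqP c1 /eqP c2; simpl in *; slia.
Qed.

Lemma graphical' : graphical_instance adj' f'.
Proof.
case=> [x|i].
- have [H1 [H2 H3]] := Hf x.
  split; [|split].
  + by move=> X _; apply: H1; apply: phi_sub.
  + by move=> A B AB _; apply: H2; [apply: phiS | apply: phi_sub].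
  + move=> X _ /=; apply/le_anti/andP; split.
    * rewrite H3; last exact: phi_sub.
      apply: H2; last exact: phi_sub.
      apply/subsetP => e; rewrite in_setI inphi ininc => /andP [/and3P [eE ne ex] /andP [_ xe]].
      rewrite inphi eE ne in_setI ininc L_edge_inl //= ex /=.
      by apply: imset_f.
    * apply: H2; last exact: phi_sub.
      by apply: phiS; apply: subsetIl.
- split; [|split].
  + by move=> X _ /=; apply: ler0n.
  + move=> A B AB _ /=; rewrite ler_nat; apply: subset_leq_card.
    by apply: setSI.
  + by move=> X _ /=; rewrite -setIA (setIidPr (pref_sub i)).
Qed.

Lemma bundle_sub (T : finType) (a : rel T) h c : bundle a h c \subset edgeset a.
Proof. by apply/subsetP => e; rewrite inE => /andP []. Qed.

Lemma set2_neq (T : finType) (x a b c d : T) :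
  x \in [set a; b] -> x != c -> x != d -> [set a; b] != [set c; d].
Proof.
move=> xab xc xd; apply/eqP => E; move: xab; rewrite E !inE.
by rewrite (negbTE xc) (negbTE xd).
Qed.

Lemma inr_neq (i j : 'I_n) : val i != val j -> (inr i : W) != inr j.
Proof. by move=> H; apply/eqP => -[E]; rewrite E eqxx in H. Qed.

Lemma inl_inr_neq x (i : 'I_n) : (inl x : W) != inr i.
Proof. by []. Qed.

Lemma inr_inl_neq x (i : 'I_n) : (inr i : W) != inl x.
Proof. by []. Qed.

Section Orient.
Variable h : {set W} -> W.
Hypothesis HE : EFX_orientation adj' f' h.

Lemma head_in x y : adj' x y -> h [set x; y] = x \/ h [set x; y] = y.
Proof.
move=> a; have := HE.1 _ (edge_mem a).
by rewrite !inE => /orP [] /eqP ->; [left|right].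
Qed.

Lemma double (q : 'I_n) (s g : {set W}) (w : W) :
  s \in pref q -> h s = w -> w != inr q -> g \in edgeset adj' -> h g = w -> g != s -> False.
Proof.
move=> sp hs wq gE hg gs.
have sE : s \in edgeset adj'.
  by move: (subsetP (pref_sub q) s sp); rewrite ininc => /andP [].
have gB : g \in bundle adj' h w by rewrite inbund gE hg eqxx.
have := HE.2 (inr q) w g gB; rewrite /= ler_nat.
have -> : #|bundle adj' h (inr q) :&: pref q| = 0%N.
  apply/eqP; rewrite cards_eq0; apply/eqP/setP => e; rewrite in_setI inbund in_set0.
  apply/negbTE/negP => /andP [/andP [_ he] ep].
  have ee := pref_uniq ep sp; rewrite ee hs in he.
  by rewrite he in wq.
rewrite leqn0 cards_eq0 => /eqP/setP/(_ s); rewrite in_setI in_setD1 inbund in_set0.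
by rewrite eq_sym gs sE hs eqxx sp.
Qed.

Lemma chain (i0 : 'I_n) : val i0 = 0%N -> h [set inl u; inr i0] != inl u ->
  forall m, (m < n)%N -> forall i : 'I_n, val i = m ->
  exists wl : W, [/\ [set wl; inr i] \in edgeset adj', h [set wl; inr i] = inr i &
     (wl = inl u /\ m = 0%N) \/ exists j : 'I_n, wl = inr j /\ (val j).+1 = m].
Proof.
move=> Hi0 Hu; elim=> [|m IH] Hm i Hi.
- have -> : i = i0 by apply: val_inj; rewrite Hi Hi0.
  have a : adj' (inl u) (inr i0) by rewrite /= eqxx Hi0.
  exists (inl u); split; [exact: edge_mem | | by left].
  by case: (head_in a) => // E; rewrite E eqxx in Hu.
- have Hm' : (m < n)%N by slia.
  pose ip := Ordinal Hm'.
  have [wl [wE wh wc]] := IH Hm' ip erefl.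
  have a : adj' (inr ip) (inr i) by rewrite /= Hi eqxx.
  case: (head_in a) => hs; last first.
    exists (inr ip); split; [exact: edge_mem | exact: hs | right; by exists ip].
  exfalso.
  case Om: (odd m).
  + case: wc => [[_ m0]|[j [wj jm]]]; first by rewrite m0 in Om.
    rewrite wj in wE wh.
    apply: (@double j [set inr j; inr ip] [set inr ip; inr i] (inr ip)) => //.
    * rewrite inE; apply/existsP; exists ip.
      have -> : odd j = false by move: Om; rewrite -jm /= => /negbTE.
      by rewrite /= jm !eqxx.
    * by apply: inr_neq => /=; slia.
    * exact: edge_mem.
    * apply: (@set2_neq _ (inr i)); first by rewrite !inE eqxx orbT.
      - by apply: inr_neq; slia.
      - by apply: inr_neq => /=; slia.
  + apply: (@double i [set inr ip; inr i] [set wl; inr ip] (inr ip)) => //.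
    * rewrite inE; apply/existsP; exists ip.
      have Oi : odd i by have := Hi; simpl => ->; rewrite /= Om.
      rewrite Oi [[set inr ip; inr i]]setUC eqxx andbT; apply/eqP; slia.
    * by apply: inr_neq => /=; slia.
    * apply/negP => /eqP E; move: (edge_mem a); rewrite -E => _.
      have : inr i \in [set wl; inr ip] by rewrite E !inE eqxx orbT.
      rewrite !inE => /orP [/eqP|/eqP].
      - case: wc => [[-> _]|[j [-> jm]]] //.
        by move=> [] /(congr1 val) /=; slia.
      - by move=> [] /(congr1 val) /=; slia.
Qed.

Lemma path_end (i0 il : 'I_n) : (0 < k)%N -> val i0 = 0%N -> val il = n.-1 ->
  h [set inl u; inr i0] != inl u -> h [set inr il; inl v] = inl v.
Proof.
move=> k0 Hi0 Hil Hu.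
have Hl : (n.-1 < n)%N by slia.
have [wl [wE wh wc]] := chain Hi0 Hu Hl Hil.
case: wc => [[_ /eqP]|[j [wj jm]]]; first by slia.
rewrite wj in wE wh.
have a : adj' (inr il) (inl v) by rewrite /= eqxx Hil eqxx orbT.
case: (head_in a) => // hs; exfalso.
apply: (@double j [set inr j; inr il] [set inr il; inl v] (inr il)) => //.
- rewrite inE; apply/existsP; exists il.
  have -> : odd j = false.
    have -> : val j = (k.-1).*2 by slia.
    by rewrite odd_double.
  by rewrite /= jm Hil !eqxx.
- by apply: inr_neq; slia.
- exact: edge_mem.
- apply: (@set2_neq _ (inl v)); first by rewrite !inE eqxx orbT.
  + exact: inl_inr_neq.
  + exact: inl_inr_neq.
Qed.

Lemma phi_noimg (g0 : {set W}) (i : 'I_n) : inr i \in g0 -> forall X, phi (X :\ g0) = phi X.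
Proof.
move=> ig X; apply/setP => e; rewrite !inE.
case: (@inl V 'I_n @: e =P g0) => [E|_]; last by [].
move: ig; rewrite -E => /imsetP [x _] //.
Qed.

Lemma key : exists b, b \in E0 /\ exists g0, g0 \in bundle adj' h (inl b) /\
   forall X, phi (X :\ g0) = phi X.
Proof.
case: (posnP k) => k0.
- have a : adj' (inl u) (inl v) by rewrite /= Huv k0.
  have Hphi : forall X, phi (X :\ [set inl u; inl v]) = phi X.
    move=> X; apply/setP => e; rewrite !inE.
    case ne: (e != E0); rewrite ?andbF ?andbT //=.
    have -> : [set inl u; inl v] = (@inl V 'I_n) @: E0 by rewrite imsetU1 imset_set1.
    by rewrite (inj_eq (imset_inj (@inl_inj _ _))) ne.
  case: (head_in a) => hs.
  + exists u; split; first by rewrite !inE eqxx.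
    exists [set inl u; inl v]; split => //.
    by rewrite inE edge_mem // hs eqxx.
  + exists v; split; first by rewrite !inE eqxx orbT.
    exists [set inl u; inl v]; split => //.
    by rewrite inE edge_mem // hs eqxx.
- have Hn : (0 < n)%N by slia.
  have Hl : (n.-1 < n)%N by slia.
  pose i0 := Ordinal Hn; pose il := Ordinal Hl.
  case Hu: (h [set inl u; inr i0] == inl u).
  + exists u; split; first by rewrite !inE eqxx.
    exists [set inl u; inr i0]; split.
    * rewrite inE edge_mem ?Hu //=.
      by rewrite eqxx.
    * by apply: (@phi_noimg _ i0); rewrite !inE eqxx orbT.
  + have hv := @path_end i0 il k0 erefl erefl (negbT Hu).
    exists v; split; first by rewrite !inE eqxx orbT.
    exists [set inr il; inl v]; split.
    * rewrite inE edge_mem ?hv //=.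
      by rewrite !eqxx orbT.
    * by apply: (@phi_noimg _ il); rewrite !inE eqxx.
Qed.

Variable b : V.
Hypothesis Hb : b \in E0.
Variable g0 : {set W}.
Hypothesis Hg0 : g0 \in bundle adj' h (inl b).
Hypothesis Hphi : forall X, phi (X :\ g0) = phi X.

Definition hG (e : {set V}) : V :=
  if e == E0 then b else match h ((@inl V 'I_n) @: e) with inl x => x | inr _ => b end.

Lemma head_img e : e \in edgeset adj -> e != E0 ->
  exists2 x, x \in e & h ((@inl V 'I_n) @: e) = inl x.
Proof.
move=> eE ne; have := HE.1 _ (L_edge_inl eE ne).
by case/imsetP => x xe ->; exists x.
Qed.

Lemma E0_edge : E0 \in edgeset adj.
Proof. exact: edge_mem. Qed.

Lemma BR c e : (e \in bundle adj hG c) =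
  ((e == E0) && (b == c)) || (e \in phi (bundle adj' h (inl c))).
Proof.
rewrite inbund inphi inbund /hG.
case: (e =P E0) => [->|/eqP ne]; first by rewrite E0_edge /= ?eqxx /= ?andbF ?orbF.
rewrite /= ?andbT.
case eE: (e \in edgeset adj) => //=.
have [x _ ->] := head_img eE ne.
by rewrite (L_edge_inl eE ne).
Qed.

Lemma F1 a (Z : {set {set V}}) : Z \subset edgeset adj -> f a (Z :\ E0) = f a Z.
Proof.
move=> ZE.
case aE: (a \in E0).
- move: aE; rewrite !inE => /orP [] /eqP ->.
  + by apply: Hzu.
  + by apply: Hzv.
- have [_ [_ H3]] := Hf a.
  rewrite H3; last by apply: subset_trans ZE; apply: subD1set.
  rewrite [RHS]H3 //; congr (f a _); apply/setP => e; rewrite !inE.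
  case: eqP => [->|] //=.
  by rewrite aE !andbF.
Qed.

Lemma BD c : bundle adj hG c :\ E0 = phi (bundle adj' h (inl c)).
Proof.
apply/setP => e; rewrite in_setD1 BR.
case: eqP => [->|] /=; last by [].
by rewrite !inE eqxx andbF.
Qed.

Lemma phiD1 (X : {set {set W}}) (g : {set V}) : phi (X :\ (@inl V 'I_n @: g)) = phi X :\ g.
Proof.
apply/setP => e; rewrite !inE (inj_eq (imset_inj (@inl_inj _ _))).
by case: (e != g); rewrite ?andbF ?andbT.
Qed.

Lemma EFX_G : EFX_orientation adj f hG.
Proof.
split.
- move=> e eE; rewrite /hG; case: eqP => [->|/eqP ne] //.
  by have [x xe ->] := head_img eE ne.
- move=> a c g gB.
  have RHS : f a (bundle adj hG a) = f' (inl a) (bundle adj' h (inl a)).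
    by rewrite -F1 ?bundle_sub // BD.
  rewrite RHS -F1; last by apply: subset_trans (bundle_sub _ _ _); apply: subD1set.
  case: (g =P E0) => [gE|/eqP ng].
  + have bc : b = c.
      move: gB; rewrite BR gE eqxx /= => /orP [/eqP //|].
      by rewrite !inE eqxx andbF.
    have -> : (bundle adj hG c :\ g) :\ E0 = bundle adj hG c :\ E0.
      by apply/setP => e; rewrite !inE gE; case: (e == E0).
    rewrite BD -bc -Hphi.
    exact: (HE.2 (inl a) (inl b) g0 Hg0).
  + have gP : g \in phi (bundle adj' h (inl c)).
      by move: gB; rewrite BR (negbTE ng).
    have -> : (bundle adj hG c :\ g) :\ E0 = (bundle adj hG c :\ E0) :\ g.
      by apply/setP => e; rewrite !inE andbCA.
    rewrite BD -phiD1.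
    apply: (HE.2 (inl a) (inl c)).
    by move: gP; rewrite inE => /and3P [].
Qed.

End Orient.
End Proof.

Theorem mainTheorem12 (R : realFieldType) (V : finType) (adj : rel V)
  (f : V -> {set {set V}} -> R) (u v : V) :
  simple_graph adj ->
  graphical_instance adj f ->
  ~ has_EFX_orientation adj f ->
  adj u v ->
  zero_value adj f u [set u; v] ->
  zero_value adj f v [set u; v] ->
  forall k : nat, ~ strongly_EFX_orientable R (subdiv adj u v k).
Proof.
move=> _ Hf Hno Huv Hzu Hzv k Hs.
have [h HE] := Hs _ (@graphical' R V adj f u v k Hf).
have [b [Hb [g0 [Hg0 Hphi]]]] := key Huv HE.
apply: Hno; exists (hG u v h b).
exact: (EFX_G Hf Huv Hzu Hzv HE Hb Hg0 Hphi).
Qed.
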